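(* Let $G=M_{27}=\langle a,b\mid a^{9}=b^3=e,\ b^{-1}ab=a^{4}\rangle$ and let $\mathcal{A}$ be the $S$-ring over $G$ with basic sets $Z_0=\{e\}$, $Z_1=\{a^3b,\ a^6b^2\}$, $Z_2=\{a,\ a^3,\ a^6,\ a^8,\ a^4b^2,\ a^7b,\ a^8b,\ a^8b^2\}$, $Z_3=G\setminus(Z_0\cup Z_1\cup Z_2)$. Then $\mathcal{A}$ is not schurian.
   Context: For $X\subseteq G$, $\underline{X}=\sum_{x\in X}x\in\mathbb{Z}G$. A subring $\mathcal{A}$ of $\mathbb{Z}G$ is an $S$-ring over $G$ with basic sets forming a partition $\mathcal{S}(\mathcal{A})$ of $G$ if $\{e\}\in\mathcal{S}(\mathcal{A})$, $X\in\mathcal{S}(\mathcal{A})\Rightarrow X^{-1}\in\mathcal{S}(\mathcal{A})$, and $\mathcal{A}=\mathrm{Span}_{\mathbb{Z}}\{\underline{X}: X\in\mathcal{S}(\mathcal{A})\}$ (the span of $\underline{Z_0},\dots,\underline{Z_3}$ is indeed closed under multiplication). Let $G_{right}=\{x\mapsto xg: g\in G\}$. An $S$-ring $\mathcal{A}$ over $G$ is schurian if there is a permutation group $\Gamma$ with $G_{right}\leq\Gamma\leq\mathrm{Sym}(G)$ such that the basic sets of $\mathcal{A}$ are exactly the orbits on $G$ of the stabilizer $\Gamma_e$ of $e$ in $\Gamma$. *)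

(* Defs.v *)
From HB Require Import structures.
From mathcomp Require Import all_boot all_order all_fingroup.
Set Implicit Arguments. Unset Strict Implicit. Unset Printing Implicit Defensive.



(* Model of G = M_27 = <a,b | a^9 = b^3 = e, b^-1 a b = a^4>:
   the pair (i, j) : 'I_9 * 'I_3 stands for a^i b^j.
   Since b a^k = a^(7k) b, the product is
   (a^i b^j)(a^k b^l) = a^(i + 7^j k) b^(j + l). *)
Definition M27 : finType := ('I_9 * 'I_3)%type.

Definition elt (i j : nat) : M27 := (inord i, inord j).

Definition m27_mul (x y : M27) : M27 :=
  elt ((((x.1 : nat) + 7 ^ (x.2 : nat) * (y.1 : nat)) %% 9)%N)
      (((x.2 : nat) + (y.2 : nat)) %% 3).

Definition m27_e : M27 := elt 0 0.
Definition m27_a : M27 := elt 1 0.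
Definition m27_b : M27 := elt 0 1.

Lemma m27_rel : m27_mul (m27_mul (elt 0 2) m27_a) m27_b = elt 4 0.
Proof. by rewrite /m27_mul /elt /=; congr (_, _); apply: val_inj; rewrite /= !inordK. Qed.

Definition schurian (T : finType) (mul : T -> T -> T) (e : T)
    (S : {set {set T}}) : Prop :=
  exists Gamma : {group {perm T}},
    (forall g : T, exists2 s : {perm T}, s \in Gamma & forall x, s x = mul x g)
    /\ S = orbit 'P 'C_Gamma[e | 'P]%g @: [set: T].

Definition Z0 : {set M27} := [set m27_e].
Definition Z1 : {set M27} := [set elt 3 1; elt 6 2].
Definition Z2 : {set M27} :=
  [set elt 1 0; elt 3 0; elt 6 0; elt 8 0; elt 4 2; elt 7 1; elt 8 1; elt 8 2].
Definition Z3 : {set M27} := ~: (Z0 :|: Z1 :|: Z2).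

Definition SA : {set {set M27}} := [set Z0; Z1; Z2; Z3].

(* Main.v *)
Require Import Defs.
From mathcomp Require Import all_boot all_order all_fingroup.

Set Implicit Arguments. Unset Strict Implicit.

Definition P := (nat * nat)%type.
Definition mulN0 (p q : P) : P := ((p.1 + 7 ^ p.2 * q.1) %% 9, (p.2 + q.2) %% 3).
Definition pw (j : nat) : nat := match j with 0 => 1 | 1 => 7 | _ => 4 end.
Definition mulN (p q : P) : P := ((p.1 + pw p.2 * q.1) %% 9, (p.2 + q.2) %% 3).
Definition UN : seq P := [seq (i, j) | i <- iota 0 9, j <- iota 0 3].

Definition ZN0 (x : P) := x == (0, 0).
Definition ZN1 (x : P) := (x == (3, 1)) || (x == (6, 2)).
Definition ZN2 (x : P) := [|| x == (1, 0), x == (3, 0), x == (6, 0), x == (8, 0),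
   x == (4, 2), x == (7, 1), x == (8, 1) | x == (8, 2)].
Definition ZN (k : nat) (x : P) : bool :=
  match k with
  | 0 => ZN0 x | 1 => ZN1 x | 2 => ZN2 x
  | 3 => ~~ [|| ZN0 x, ZN1 x | ZN2 x] | _ => false end.

Definition relN (k : nat) (p q : P) : bool :=
  has (fun d => ZN k d && (mulN d p == q)) UN.

Definition compatN (p p' q q' : P) : bool :=
  all (fun k => relN k p q ==> relN k p' q') (iota 0 4).

Lemma disjN : all (fun d => all (fun k => all (fun l => ZN k d ==> ZN l d ==> (k == l))
   (iota 0 4)) (iota 0 4)) UN.
Proof. by vm_compute. Qed.

Lemma mulN_eq : all (fun p => all (fun q => mulN0 p q == mulN p q) UN) UN.
Proof. Time by vm_compute. Qed.

Definition ywit (v : P) : P :=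
  if [|| v == (4,0), v == (5,0) | v == (3,2)] then (3,1)
  else if v == (2,0) then (3,2) else (3,0).

Lemma checkN : all (fun v => (compatN (0,0) (0,0) (0,2) v && compatN (0,1) (1,1) (0,2) v) ==>
  all (fun u => (compatN (0,0) (0,0) (ywit v) u && compatN (0,1) (1,1) (ywit v) u) ==>
     ~~ compatN (0,2) v (ywit v) u) UN) UN.
Proof. Time by vm_compute. Qed.

Definition code (x : M27) : P := (val x.1, val x.2).

Lemma code_inj : injective code.
Proof.
move=> [a b] [c d] [/val_inj -> /val_inj ->] //.
Qed.

Lemma code_U x : code x \in UN.
Proof.
apply/allpairsP; exists (val x.1, val x.2); split; rewrite ?mem_iota ?ltn_ord //.
Qed.

Lemma mem_UN p : p \in UN -> p.1 < 9 /\ p.2 < 3.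
Proof. case/allpairsP => [[i j] []]; rewrite !mem_iota /= => hi hj ->; by split. Qed.

Lemma code_elt i j : i < 9 -> j < 3 -> code (elt i j) = (i, j).
Proof. by move=> hi hj; rewrite /code /elt /= !inordK. Qed.

Lemma mulN0E p q : p \in UN -> q \in UN -> mulN0 p q = mulN p q.
Proof. by move=> hp hq; apply/eqP; move/allP: mulN_eq => /(_ p hp) /allP /(_ q hq). Qed.

Lemma code_mul x y : code (m27_mul x y) = mulN (code x) (code y).
Proof.
rewrite -mulN0E ?code_U //.
by rewrite /code /m27_mul /elt /= !inordK // ltn_pmod.
Qed.

Lemma eq_code x i j : i < 9 -> j < 3 -> (x == elt i j) = (code x == (i, j)).
Proof. by move=> hi hj; rewrite -code_elt // (inj_eq code_inj). Qed.

Definition Zs (k : nat) : {set M27} := nth set0 [:: Z0; Z1; Z2; Z3] k.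

Lemma ZsN k x : (x \in Zs k) = ZN k (code x).
Proof.
case: k => [|[|[|[|k]]]]; rewrite /Zs /= /Z3 /Z0 /Z1 /Z2 /ZN0 /ZN1 /ZN2 /m27_e ?inE -?orbA //;
  rewrite -?(inj_eq code_inj) ?code_elt //.
by case: k => [|k]; rewrite inE.
Qed.

Lemma relP k x y :
  (exists2 d, d \in Zs k & m27_mul d x = y) <-> relN k (code x) (code y).
Proof.
split.
  move=> [d dZ <-]; apply/hasP; exists (code d); first exact: code_U.
  by rewrite -ZsN dZ /= code_mul.
case/hasP => d dU /andP [dz /eqP e].
have [h1 h2] := mem_UN dU.
exists (elt d.1 d.2).
  by rewrite ZsN code_elt // -surjective_pairing.
by apply: code_inj; rewrite code_mul code_elt // -surjective_pairing.
Qed.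

Lemma sameZ l k d : l < 4 -> d \in Zs l -> d \in Zs k -> l = k.
Proof.
rewrite !ZsN => hl zl zk.
case: (ltnP k 4) => hk; last first.
  by move: zk; case: k hk => [|[|[|[|k]]]].
move/allP: disjN => /(_ _ (code_U d)) /allP /(_ l).
rewrite mem_iota hl => /(_ isT) /allP /(_ k).
by rewrite mem_iota hk => /(_ isT) /implyP /(_ zl) /implyP /(_ zk) /eqP.
Qed.

Lemma blockSA B k d : B \in SA -> d \in B -> d \in Zs k -> B = Zs k.
Proof.
move=> BS.
have H l : l < 4 -> B = Zs l -> d \in B -> d \in Zs k -> B = Zs k.
  by move=> hl -> dB dk; rewrite (sameZ hl dB dk).
move: BS; rewrite /SA !inE => /orP [/orP [/orP [] | ] | ] /eqP hB;
  [apply: (H 0) | apply: (H 1) | apply: (H 2) | apply: (H 3)] => //.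
Qed.

Definition zz : M27 := elt 0 1.
Definition zz' : M27 := elt 1 1.
Definition ww : M27 := elt 0 2.

Lemma mul_e x : m27_mul m27_e x = x.
Proof.
apply: code_inj; rewrite code_mul /m27_e code_elt //.
case: (mem_UN (code_U x)) => h1 h2.
by rewrite /mulN /= mul1n !modn_small // -surjective_pairing.
Qed.

Theorem proposition3p1 : ~ schurian m27_mul m27_e SA.
Proof.
move=> [Gam [hR hS]].
set C := 'C_Gam[m27_e | 'P]%g.
have orbSA d : orbit 'P C d \in SA by rewrite hS; apply: imset_f; rewrite inE.
have pres s k x y : s \in Gam -> (exists2 d, d \in Zs k & m27_mul d x = y) ->
    exists2 d, d \in Zs k & m27_mul d (s x) = s y.
  move=> sG [d dZ <-].
  have [r1 r1G r1E] := hR x.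
  have [r2 r2G r2E] := hR (s x).
  pose g := (r1 * s * r2^-1)%g.
  have gG : g \in Gam by rewrite !groupM ?groupV.
  have gE u : g u = r2^-1%g (s (m27_mul u x)) by rewrite !permM r1E.
  have gC : g \in C.
    rewrite inE gG /=; apply/astab1P.
    by rewrite /= apermE gE mul_e -{1}(mul_e (s x)) -r2E permK.
  exists (g d); last by rewrite -r2E gE permKV.
  have := blockSA (orbSA d) (orbit_refl _ _ _) dZ => <-.
  by have := mem_orbit 'P d gC; rewrite /= apermE.
have zO : zz' \in orbit 'P C zz.
  have zZ : zz \in Zs 3 by rewrite ZsN code_elt.
  rewrite (blockSA (orbSA zz) (orbit_refl _ _ _) zZ).
  by rewrite ZsN code_elt.
case/orbitP: zO => g gC gz.
move: gC; rewrite inE => /andP [gG /astab1P ge].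
move: gz ge; rewrite /= !apermE => gz ge.
have cg x y : compatN (code x) (code (g x)) (code y) (code (g y)).
  apply/allP => k _; apply/implyP => /relP h; apply/relP; exact: pres.
have he : code m27_e = (0, 0) by rewrite code_elt.
have hw : code ww = (0, 2) by rewrite code_elt.
have hz : code zz = (0, 1) by rewrite code_elt.
have hz' : code zz' = (1, 1) by rewrite code_elt.
move/allP: checkN => /(_ _ (code_U (g ww))) /implyP.
have A1 : compatN (0,0) (0,0) (0,2) (code (g ww)) by have := cg m27_e ww; rewrite ge he hw.
have A2 : compatN (0,1) (1,1) (0,2) (code (g ww)) by have := cg zz ww; rewrite gz hz hz' hw.
rewrite A1 A2 => /(_ isT) /allP.
set y0 := ywit (code (g ww)).
have hy : y0 \in UN by rewrite /y0 /ywit; case: ifP => _; [|case: ifP => _].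
have [b1 b2] := mem_UN hy.
pose y := elt y0.1 y0.2.
have hyc : code y = y0 by rewrite code_elt // -surjective_pairing.
move=> /(_ (code (g y)) (code_U _)) /implyP.
have B1 : compatN (0,0) (0,0) y0 (code (g y)) by have := cg m27_e y; rewrite ge he hyc.
have B2 : compatN (0,1) (1,1) y0 (code (g y)) by have := cg zz y; rewrite gz hz hz' hyc.
rewrite B1 B2 => /(_ isT).
by have := cg ww y; rewrite hw hyc => ->.
Qed.
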